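(* The set $\mathrm{Rec}(N^* )$ of recognizable subsets of $N^*$ is uncountable.
   Context: $N^*$ is the commutative monoid of finite sequences of non-negative integers whose last entry is non-zero (including the empty sequence), with pointwise addition (shorter sequence padded by zeros) and the empty sequence as unit; equivalently the free commutative monoid on countably many generators, isomorphic to $(\mathbb{Z}_{>0},\times,1)$. A subset $S$ of a monoid $M$ is recognizable if there exist a finite monoid $N'$, a monoid morphism $\varphi\colon M \to N'$ and a subset $T \subseteq N'$ with $S = \varphi^{-1}(T)$. *)

(* Defs.v *)
From mathcomp Require Import all_boot.
Set Implicit Arguments. Unset Strict Implicit. Unset Printing Implicit Defensive.

Definition nstar_wf (s : seq nat) : bool := nilp s || (last 0 s != 0).

Definition Nstar := {s : seq nat | nstar_wf s}.

Definition addseq (s t : seq nat) : seq nat :=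
  mkseq (fun i => nth 0 s i + nth 0 t i) (maxn (size s) (size t)).

Lemma addseq_wf (s t : seq nat) : nstar_wf s -> nstar_wf t -> nstar_wf (addseq s t).
Proof.
rewrite /nstar_wf /addseq /nilp size_mkseq.
case: (posnP (maxn (size s) (size t))) => [->//|m0] Hs Ht.
apply/orP; right.
rewrite (last_nth 0) size_mkseq.
case E: (maxn (size s) (size t)) m0 => [//|m] _ /=.
rewrite nth_mkseq ?leqnn //.
have [le|lt] := leqP (size t) (size s).
- move: E; rewrite (maxn_idPl le) => E.
  move: Hs; rewrite E /= (last_nth 0) E /=.
  by case: (m.+1 == 0); rewrite ?addn_eq0 => // /negbTE ->.
- move: E; rewrite (maxn_idPr (ltnW lt)) => E.
  move: Ht; rewrite E /= (last_nth 0) E /=.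
  by rewrite addn_eq0 => /negbTE ->; rewrite andbF.
Qed.

Definition nstar_add (x y : Nstar) : Nstar :=
  exist _ (addseq (sval x) (sval y)) (addseq_wf (svalP x) (svalP y)).

Definition nstar_zero : Nstar := exist _ [::] (erefl true).

Record finMonoid := FinMonoid {
  fm_carrier :> finType;
  fm_mul : fm_carrier -> fm_carrier -> fm_carrier;
  fm_one : fm_carrier;
  fm_mulA : forall x y z, fm_mul x (fm_mul y z) = fm_mul (fm_mul x y) z;
  fm_mul1x : forall x, fm_mul fm_one x = x;
  fm_mulx1 : forall x, fm_mul x fm_one = x
}.

Definition nstar_morphism (M : finMonoid) (phi : Nstar -> M) : Prop :=
  phi nstar_zero = fm_one M /\
  forall x y, phi (nstar_add x y) = fm_mul (phi x) (phi y).

Definition recognizable (S : Nstar -> Prop) : Prop :=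
  exists (M : finMonoid) (phi : Nstar -> M) (T : M -> Prop),
    nstar_morphism phi /\ forall x, S x <-> T (phi x).

(* Main.v *)
Require Import Defs.
From mathcomp Require Import all_boot.
From Stdlib Require Import ClassicalEpsilon.

Definition Fc (c : nat -> nat) (x : seq nat) : nat :=
  \sum_(i < size x) c i * nth 0 x i.

Lemma Fc_widen c x n : size x <= n -> Fc c x = \sum_(i < n) c i * nth 0 x i.
Proof.
move=> le; rewrite /Fc (big_ord_widen n (fun i => c i * nth 0 x i) le).
rewrite [RHS](bigID (fun i : 'I_n => i < size x)) /= [X in _ = _ + X]big1 ?addn0 //.
by move=> i; rewrite -leqNgt => h; rewrite nth_default // muln0.
Qed.

Lemma Fc_add c s t : Fc c (addseq s t) = Fc c s + Fc c t.
Proof.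
rewrite /addseq {1}/Fc size_mkseq.
rewrite (Fc_widen c s _ (leq_maxl (size s) (size t))) (Fc_widen c t _ (leq_maxr (size s) (size t))).
rewrite -big_split /=; apply: eq_bigr => i _.
by rewrite nth_mkseq // mulnDr.
Qed.

Lemma Fc_le c x : (forall i, c i <= 1) -> Fc c x <= Fc (fun _ => 1) x.
Proof.
move=> h; rewrite /Fc; apply: leq_sum => i _.
by rewrite mul1n; have := h i; case: (c i) => [|[]]//; rewrite mul1n.
Qed.

Definition M4 := option (option bool).
Definition m4mul (x y : M4) : M4 :=
  match x, y with None, _ => y | _, None => x | _, _ => Some None end.

Lemma m4mulA x y z : m4mul x (m4mul y z) = m4mul (m4mul x y) z.
Proof. by case: x; case: y; case: z. Qed.
Lemma m4mul1 x : m4mul None x = x. Proof. by []. Qed.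
Lemma m4mulx1 x : m4mul x None = x. Proof. by case: x. Qed.

Definition FM : finMonoid := FinMonoid m4mulA m4mul1 m4mulx1.

Section Diag.
Variable b : nat -> bool.
Definition cb i := nat_of_bool (b i).
Definition phib (x : Nstar) : FM :=
  let s := Fc (fun _ => 1) (sval x) in
  if s == 0 then None else if s == 1 then Some (Some (Fc cb (sval x) == 1))
  else Some None.

Lemma cb_le i : cb i <= 1. Proof. by rewrite /cb; case: (b i). Qed.

Lemma phib_morph : nstar_morphism phib.
Proof.
split; first by rewrite /phib /= /Fc big_ord0.
move=> x y; rewrite /phib /nstar_add /= !Fc_add.
have hx := Fc_le _ (sval x) (@cb_le); have hy := Fc_le _ (sval y) (@cb_le).
move: hx hy.
case: (Fc (fun _ => 1) (sval x)) => [|[|sx]]; case: (Fc (fun _ => 1) (sval y)) => [|[|sy]];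
  rewrite ?leqn0 => hx hy //=; rewrite ?(eqP hx) ?(eqP hy) ?addn0 ?add0n //.

Qed.

Definition en (n : nat) : Nstar.
Proof. exists (rcons (nseq n 0) 1); by rewrite /nstar_wf last_rcons orbT. Defined.

Lemma Fc_en c n : Fc c (sval (en n)) = c n.
Proof.
rewrite /= (Fc_widen c _ n.+1); last by rewrite size_rcons size_nseq.
rewrite big_ord_recr /= big1 ?add0n.
  by rewrite nth_rcons size_nseq ltnn eqxx muln1.
move=> i _; rewrite nth_rcons size_nseq ltn_ord nth_nseq ltn_ord.
by rewrite muln0.
Qed.

Lemma phib_en n : phib (en n) = Some (Some (b n)).
Proof. by rewrite /phib !Fc_en /cb; case: (b n). Qed.
End Diag.

Theorem mainTheorem11 :
  ~ exists f : nat -> (Nstar -> Prop),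
      forall S : Nstar -> Prop, recognizable S ->
        exists n : nat, forall x : Nstar, f n x <-> S x.
Proof.
move=> [f hf].
pose b n : bool := if excluded_middle_informative (f n (en n)) then false else true.
have rec : recognizable (fun x => phib b x = Some (Some true)).
  exists FM, (phib b), (fun m => m = Some (Some true)); split => //.
  exact: phib_morph.
have [n hn] := hf _ rec.
have := hn (en n); rewrite phib_en /b.
case: excluded_middle_informative => h /= [h1 h2].
- by have := h1 h.
- by apply: h; apply: h2.
Qed.
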